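(* For every real $\epsilon > 0$ and every positive integer $k$, there are only finitely many numerical semigroups $\Lambda$ with $e(\Lambda) = k$ and $m(\Lambda) > \epsilon\, c(\Lambda)$. (In the proof it is shown that any such $\Lambda$ satisfies $c(\Lambda) \le 2^k/\epsilon^k$.)
   Context: A numerical semigroup is a subset $\Lambda \subseteq \mathbb{Z}_{\ge 0}$ that contains $0$, is closed under addition, and has finite complement in $\mathbb{Z}_{\ge 0}$. Every numerical semigroup has a unique minimal (with respect to inclusion) generating set, which is finite; its size is the embedding dimension $e(\Lambda)$. The conductor is $c(\Lambda) = \max(\mathbb{Z}_{\ge 0}\setminus\Lambda) + 1$ (with $c(\Lambda)=0$ if $\Lambda = \mathbb{Z}_{\ge 0}$). The multiplicity is $m(\Lambda) = \min(\Lambda\setminus\{0\})$. *)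

(* Defs.v *)
From Stdlib Require Import Reals Arith List.
Import ListNotations.

Definition numerical_semigroup (S : nat -> Prop) : Prop :=
  S 0%nat /\
  (forall a b, S a -> S b -> S (a + b)%nat) /\
  (exists N, forall n, (N <= n)%nat -> S n).

Inductive gen (G : list nat) : nat -> Prop :=
| gen0 : gen G 0
| genS : forall x n, In x G -> gen G n -> gen G (x + n).

Definition generates (S : nat -> Prop) (G : list nat) : Prop :=
  forall n, S n <-> gen G n.

Definition minimal_generating_set (S : nat -> Prop) (G : list nat) : Prop :=
  NoDup G /\ generates S G /\
  (forall G', incl G' G -> generates S G' -> incl G G').

Definition embedding_dimension (S : nat -> Prop) (k : nat) : Prop :=
  exists G, minimal_generating_set S G /\ length G = k.

Definition is_multiplicity (S : nat -> Prop) (m : nat) : Prop :=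
  S m /\ (0 < m)%nat /\ (forall n, S n -> (0 < n)%nat -> (m <= n)%nat).

Definition is_conductor (S : nat -> Prop) (c : nat) : Prop :=
  (forall n, (c <= n)%nat -> S n) /\ (c = 0%nat \/ ~ S (c - 1)%nat).

(* Main.v *)
Require Import Defs.
From Stdlib Require Import Reals Arith List Lia Lra Psatz Classical ZArith.
Import ListNotations.

Fixpoint sums (G : list nat) (j : nat) : list nat :=
  match j with
  | O => [0%nat]
  | S j' => sums G j' ++ flat_map (fun x => map (plus x) (sums G j')) G
  end.

Lemma sums_length G j : length (sums G j) = ((1 + length G) ^ j)%nat.
Proof.
  induction j as [|j IH]; simpl; auto.
  rewrite length_app, IH.
  assert (H : forall l, length (flat_map (fun x => map (plus x) (sums G j)) l)
              = (length l * (1 + length G) ^ j)%nat).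
  { induction l; simpl; auto. rewrite length_app, length_map, IHl, IH. ring. }
  rewrite H. simpl. ring.
Qed.

Lemma sums_mono G j n : In n (sums G j) -> In n (sums G (S j)).
Proof. intros H; simpl; apply in_or_app; auto. Qed.

Lemma gen_sums G m (Hm : (0 < m)%nat) (HG : forall x, In x G -> (m <= x)%nat) :
  forall n, gen G n -> forall j, (n < (S j) * m)%nat -> In n (sums G j).
Proof.
  induction 1 as [|x n Hx Hn IH]; intros j Hj.
  - clear Hj; induction j; simpl; auto. apply in_or_app; auto.
  - pose proof (HG x Hx). destruct j as [|j]; [simpl in Hj; lia|].
    simpl. apply in_or_app; right. apply in_flat_map. exists x; split; auto.
    apply in_map. apply IH. simpl in *. lia.
Qed.

Fixpoint all_bits (n : nat) : list (list bool) :=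
  match n with
  | O => [[]]
  | S n' => map (cons true) (all_bits n') ++ map (cons false) (all_bits n')
  end.

Lemma all_bits_in b : In b (all_bits (length b)).
Proof.
  induction b as [|a b IH]; simpl; auto.
  apply in_or_app; destruct a; [left|right]; apply in_map; auto.
Qed.

Lemma bits_exist (P : nat -> Prop) : forall B start, exists b, length b = B /\
  forall i, (i < B)%nat -> (nth i b false = true <-> P (start + i)%nat).
Proof.
  induction B as [|B IH]; intros start.
  - exists []; split; auto; intros; lia.
  - destruct (IH (S start)) as [b [Hl Hb]].
    destruct (classic (P start)) as [Hp|Hp].
    + exists (true :: b); split; simpl; auto. intros [|i] Hi; simpl.
      * rewrite Nat.add_0_r; tauto.
      * rewrite Hb by lia. replace (S start + i)%nat with (start + S i)%nat by lia; tauto.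
    + exists (false :: b); split; simpl; auto. intros [|i] Hi; simpl.
      * rewrite Nat.add_0_r; split; intro H; [discriminate|contradiction].
      * rewrite Hb by lia. replace (S start + i)%nat with (start + S i)%nat by lia; tauto.
Qed.

Lemma gen_incl G G' n : incl G' G -> gen G' n -> gen G n.
Proof. intros Hi H; induction H; constructor; auto. Qed.

Lemma no_zero S G : minimal_generating_set S G -> ~ In 0%nat G.
Proof.
  intros [Hnd [Hgen Hmin]] H0.
  set (G' := remove Nat.eq_dec 0%nat G).
  assert (Hi : incl G' G) by (intros x Hx; apply (in_remove _ _ _ _ Hx)).
  assert (Hg : generates S G').
  { intros n; split; intro Hs.
    - apply Hgen in Hs. revert Hs. induction 1 as [|x n Hx Hn IH]; [constructor|].
      destruct (Nat.eq_dec x 0) as [->|Hne]; [simpl; auto|].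
      constructor; auto. apply in_in_remove; auto.
    - apply Hgen. apply (gen_incl G G'); auto. }
  specialize (Hmin G' Hi Hg 0%nat H0). apply (remove_In Nat.eq_dec G 0%nat). exact Hmin.
Qed.

Lemma bound_T (eps : R) : (0 < eps)%R -> exists T : nat, (0 < T)%nat /\ (eps * INR T > 1)%R.
Proof.
  intros He. destruct (archimed (/ eps)) as [H1 _].
  assert (Hpos : (0 < / eps)%R) by (apply Rinv_0_lt_compat; auto).
  assert (Hz : (0 < up (/eps))%Z) by (apply lt_IZR; lra).
  exists (Z.to_nat (up (/eps))). rewrite INR_IZR_INZ, Z2Nat.id by lia. split; [lia|].
  apply Rmult_lt_compat_l with (r := eps) in H1; auto.
  rewrite Rinv_r in H1 by lra. lra.
Qed.

Theorem lemma4 (eps : R) (k : nat) :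
  (0 < eps)%R -> (0 < k)%nat ->
  exists L : list (nat -> Prop),
    forall (S : nat -> Prop) (m c : nat),
      numerical_semigroup S ->
      embedding_dimension S k ->
      is_multiplicity S m ->
      is_conductor S c ->
      (INR m > eps * INR c)%R ->
      exists T, In T L /\ (forall n, S n <-> T n).
Proof.
  intros He Hk.
  destruct (bound_T eps He) as [T [HT HeT]].
  set (B := (T * (1 + k) ^ T)%nat).
  exists (map (fun b => fun x => (B <= x)%nat \/ nth x b false = true) (all_bits B)).
  intros S m c Hns [G [HG HlG]] [Sm [Hm0 Hmmin]] [Hc _] Hmc.
  assert (HGm : forall x, In x G -> (m <= x)%nat).
  { intros x Hx. apply Hmmin.
    - destruct HG as [_ [Hgen _]]. apply Hgen.
      replace x with (x + 0)%nat by lia. constructor; auto. constructor.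
    - destruct x; [exfalso; exact (no_zero _ _ HG Hx)|lia]. }
  assert (HcmT : (c < m * T)%nat).
  { apply INR_lt. rewrite mult_INR.
    assert (0 <= INR c)%R by apply pos_INR.
    assert (0 < INR T)%R by (apply lt_0_INR; lia).
    nra. }
  assert (HcB : (c <= B)%nat).
  { assert (Hincl : incl (seq c m) (sums G T)).
    { intros n Hn. apply in_seq in Hn.
      destruct HG as [_ [Hgen _]].
      apply (gen_sums G m Hm0 HGm); [apply Hgen, Hc; lia|].
      simpl. nia. }
    pose proof (NoDup_incl_length (seq_NoDup m c) Hincl) as Hlen.
    rewrite length_seq, sums_length, HlG in Hlen.
    unfold B. nia. }
  destruct (bits_exist S B 0) as [b [Hbl Hb]].
  exists (fun x => (B <= x)%nat \/ nth x b false = true). split.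
  - apply (in_map (fun b0 : list bool => fun x => (B <= x)%nat \/ nth x b0 false = true)).
    rewrite <- Hbl. apply all_bits_in.
  - intros n. destruct (Nat.lt_ge_cases n B) as [Hn|Hn].
    + rewrite (Hb n Hn). simpl. split; [tauto|]. intros [H|H]; [lia|auto].
    + split; [auto|]. intros _. apply Hc. lia.
Qed.
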